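(* Let $U$ be an infinite uniquely $2$-divisible group, $\nu$ an involutory almost regular automorphism of $U$, $G=U\rtimes\langle\nu\rangle$, and let $A$ be an infinite abelian subgroup of $U$ which is inverted by $\nu$ and maximal (with respect to inclusion) among abelian subgroups of $U$ inverted by $\nu$. For $u\in U$ let $A_u$ be the subgroup of $A$ consisting of the elements inverted by the involution $u\nu u^{-1}\in G$. Then $|A:A_u|<\infty$ for every $u\in U$.
   Context: An automorphism $\nu$ is involutory if $\nu\ne\mathrm{id}$ and $\nu^2=\mathrm{id}$, and almost regular if $C_U(\nu)$ is finite. A group is uniquely $2$-divisible if every element has a unique square root. $G$ is the semidirect product of $U$ by $\langle\nu\rangle$, with $U,\nu$ identified with their images in $G$. A subgroup is inverted by an element $t$ if $t^{-1}xt=x^{-1}$ for all its elements $x$. (Such a maximal infinite $A$ exists by Zorn's lemma and the existence of an infinite abelian subgroup inverted by $\nu$.) *)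

(* Defs.v *)
From Stdlib Require Import List.
Set Implicit Arguments.

Section Groups.
Variables (U : Type) (mul : U -> U -> U) (one : U) (inv : U -> U).

Definition is_group : Prop :=
  (forall x y z, mul x (mul y z) = mul (mul x y) z) /\
  (forall x, mul one x = x) /\ (forall x, mul x one = x) /\
  (forall x, mul (inv x) x = one) /\ (forall x, mul x (inv x) = one).

Definition finite_set (T : Type) (P : T -> Prop) : Prop :=
  exists s : list T, forall x, P x -> In x s.

Definition is_automorphism (nu : U -> U) : Prop :=
  (forall x y, nu (mul x y) = mul (nu x) (nu y)) /\
  (forall x y, nu x = nu y -> x = y) /\
  (forall y, exists x, nu x = y).

Definition involutory (nu : U -> U) : Prop :=
  (exists x, nu x <> x) /\ (forall x, nu (nu x) = x).

Definition almost_regular (nu : U -> U) : Prop :=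
  finite_set (fun x => nu x = x).

Definition uniquely_2_divisible : Prop :=
  forall x, exists y, mul y y = x /\ forall z, mul z z = x -> z = y.

Definition is_subgroup (S : U -> Prop) : Prop :=
  S one /\ (forall x y, S x -> S y -> S (mul x y)) /\ (forall x, S x -> S (inv x)).

Definition is_abelian (S : U -> Prop) : Prop :=
  forall x y, S x -> S y -> mul x y = mul y x.

(* Semidirect product G = U x| <nu>, nu involutory, realised on U * bool:
   (a, e) stands for a * nu^e, with (a,e)(b,f) = (a * nu^e(b), e xor f). *)
Variable nu : U -> U.

Definition nupow (e : bool) (x : U) : U := if e then nu x else x.

Definition Gmul (g h : U * bool) : U * bool :=
  (mul (fst g) (nupow (snd g) (fst h)), xorb (snd g) (snd h)).

Definition Ginv (g : U * bool) : U * bool :=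
  (nupow (snd g) (inv (fst g)), snd g).

Definition Gone : U * bool := (one, false).

Definition inU (x : U) : U * bool := (x, false).
Definition Gnu : U * bool := (one, true).

Definition inverted_by (t : U * bool) (S : U -> Prop) : Prop :=
  forall x, S x -> Gmul (Ginv t) (Gmul (inU x) t) = inU (inv x).

Definition conj_nu (u : U) : U * bool := Gmul (inU u) (Gmul Gnu (inU (inv u))).

Definition A_sub (A : U -> Prop) (u : U) : U -> Prop :=
  fun x => A x /\ Gmul (Ginv (conj_nu u)) (Gmul (inU x) (conj_nu u)) = inU (inv x).

Definition finite_index (A B : U -> Prop) : Prop :=
  exists s : list U, (forall x, In x s -> A x) /\
    forall a, A a -> exists x, In x s /\ B (mul (inv x) a).

Definition maximal_abelian_inverted (A : U -> Prop) : Prop :=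
  is_subgroup A /\ is_abelian A /\ inverted_by Gnu A /\
  forall B : U -> Prop, is_subgroup B -> is_abelian B -> inverted_by Gnu B ->
    (forall x, A x -> B x) -> forall x, B x -> A x.

End Groups.

(* Main.v *)
Require Import Defs.
From Stdlib Require Import List Classical.

Theorem proposition3p5 (U : Type) (mul : U -> U -> U) (one : U) (inv : U -> U)
  (nu : U -> U) (A : U -> Prop) :
  is_group mul one inv ->
  ~ finite_set (fun _ : U => True) ->
  uniquely_2_divisible mul ->
  is_automorphism mul nu ->
  involutory nu ->
  almost_regular nu ->
  ~ finite_set A ->
  maximal_abelian_inverted mul one inv nu A ->
  forall u : U, finite_index mul inv A (A_sub mul one inv nu A u).
Proof.
  intros Hg _ H2 Haut Hinvol Hreg _ HA u.
  destruct Hg as [as_ [m1 [m1r [mVl mVr]]]].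
  destruct Haut as [numul _].
  destruct Hinvol as [_ nunu].
  destruct HA as [[A1 [Amul Ainv]] [Aab [Ainvd _]]].
  assert (asr : forall x y z, mul (mul x y) z = mul x (mul y z)) by (intros; rewrite as_; reflexivity).
  assert (cl : forall x y, mul (inv x) (mul x y) = y)
    by (intros; rewrite as_, mVl, m1; reflexivity).
  assert (cr : forall x y, mul x (mul (inv x) y) = y)
    by (intros; rewrite as_, mVr, m1; reflexivity).
  assert (lcan : forall x y z, mul x y = mul x z -> y = z).
  { intros x y z H. rewrite <- (cl x y), <- (cl x z), H. reflexivity. }
  assert (invu : forall x y, mul x y = one -> y = inv x).
  { intros x y H. apply (lcan x). rewrite H, mVr. reflexivity. }
  assert (invinv : forall x, inv (inv x) = x).
  { intros x. symmetry. apply invu. apply mVl. }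
  assert (invmul : forall x y, inv (mul x y) = mul (inv y) (inv x)).
  { intros x y. symmetry. apply invu. rewrite asr, cr, mVr. reflexivity. }
  assert (inv1 : inv one = one).
  { symmetry. apply invu. apply m1. }
  assert (nu1 : nu one = one).
  { apply (lcan (nu one)). rewrite <- numul, m1, m1r. reflexivity. }
  assert (nuinv : forall x, nu (inv x) = inv (nu x)).
  { intros x. apply invu. rewrite <- numul, mVr, nu1. reflexivity. }
  Ltac gn asr cl cr m1 m1r mVl mVr invinv invmul inv1 :=
    repeat (rewrite ?asr, ?cl, ?cr, ?m1, ?m1r, ?mVl, ?mVr, ?invinv, ?invmul, ?inv1).
  assert (nuA : forall a, A a -> nu a = inv a).
  { intros a Ha. specialize (Ainvd a Ha). unfold Gmul, Ginv, Gnu, inU, nupow in Ainvd.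
    simpl in Ainvd. injection Ainvd as E. rewrite inv1, nu1, m1, m1r in E. exact E. }
  assert (squniq : forall z w, mul z z = mul w w -> z = w).
  { intros z w E. destruct (H2 (mul z z)) as [y [_ Hy]].
    rewrite (Hy z eq_refl), (Hy w (eq_sym E)). reflexivity. }
  assert (Isqrt : forall y z, nu y = inv y -> mul z z = y -> nu z = inv z).
  { intros y z Hy Hz. assert (E : inv (nu z) = z).
    { apply squniq. rewrite <- invmul, <- numul, Hz, Hy, invinv. auto. }
    rewrite <- E at 2. rewrite invinv. reflexivity. }
  set (c := mul u (nu (inv u))).
  assert (nuc : nu c = inv c).
  { unfold c. rewrite numul, nunu, invmul, nuinv, invinv. reflexivity. }
  set (P := fun a => mul a (mul c (mul c a))).
  assert (PI : forall a, A a -> nu (P a) = inv (P a)).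
  { intros a Ha. unfold P. rewrite !numul, nuc, nuA by exact Ha.
    gn asr cl cr m1 m1r mVl mVr invinv invmul inv1. reflexivity. }
  set (F := fun i a => mul (inv i) (mul a c)).
  assert (Ffix : forall a i, A a -> mul i i = P a -> nu (F i a) = F i a).
  { intros a i Ha Hi. assert (ni := Isqrt _ _ (PI a Ha) Hi).
    unfold F. rewrite !numul, nuinv, ni, nuc, (nuA a Ha), invinv.
    apply (lcan i). rewrite cr, <- (asr i i), Hi. unfold P.
    gn asr cl cr m1 m1r mVl mVr invinv invmul inv1. reflexivity. }
  assert (Asub : forall y, A y -> mul y c = mul c y -> A_sub mul one inv nu A u y).
  { intros y Hy Hc. split; [exact Hy|].
    unfold conj_nu, Gmul, Ginv, Gnu, inU, nupow; simpl. f_equal.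
    rewrite m1. fold c. rewrite <- numul, Hc, cl. apply nuA. exact Hy. }
  assert (rcan : forall x y z, mul y x = mul z x -> y = z).
  { intros x y z H. rewrite <- (m1r y), <- (m1r z), <- (mVr x), !as_, H. reflexivity. }
  assert (Key : forall a b i j, A a -> A b -> mul i i = P a -> mul j j = P b ->
            F i a = F j b -> mul (mul (inv b) a) c = mul c (mul (inv b) a)).
  { intros a b i j Ha Hb Hi Hj E. unfold F in E.
    rewrite !as_ in E. apply rcan in E.
    set (e := mul b (inv a)).
    assert (He : A e) by (apply Amul; auto).
    assert (E1 : j = mul e i).
    { apply (rcan (mul (inv i) a)). rewrite E at 1. unfold e.
      gn asr cl cr m1 m1r mVl mVr invinv invmul inv1. reflexivity. }
    assert (ni := Isqrt _ _ (PI a Ha) Hi).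
    assert (nj := Isqrt _ _ (PI b Hb) Hj).
    assert (Ec : mul (inv e) (inv i) = mul (inv i) (inv e)).
    { rewrite E1, numul, (nuA e He), ni, invmul in nj. exact nj. }
    assert (Ec2 : mul i e = mul e i).
    { apply (f_equal inv) in Ec. rewrite !invmul, !invinv in Ec. exact Ec. }
    assert (Eea : mul e a = mul a e) by (apply Aab; auto).
    assert (EP : mul e (P a) = mul (P a) e).
    { rewrite <- Hi, (as_ e i i), <- Ec2, <- (as_ i e i), <- Ec2, (as_ i i e). reflexivity. }
    unfold P in EP.
    assert (Ecc : mul e (mul c c) = mul (mul c c) e).
    { apply (lcan a). apply (rcan a).
      transitivity (mul (mul e a) (mul c (mul c a))).
      { rewrite Eea. gn asr cl cr m1 m1r mVl mVr invinv invmul inv1. reflexivity. }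
      transitivity (mul a (mul c (mul c (mul a e)))).
      { rewrite asr, EP. gn asr cl cr m1 m1r mVl mVr invinv invmul inv1. reflexivity. }
      rewrite <- Eea. gn asr cl cr m1 m1r mVl mVr invinv invmul inv1. reflexivity. }
    assert (Ece : mul e (mul c (inv e)) = c).
    { apply squniq.
      transitivity (mul (mul e (mul c c)) (inv e)).
      { gn asr cl cr m1 m1r mVl mVr invinv invmul inv1. reflexivity. }
      rewrite Ecc. gn asr cl cr m1 m1r mVl mVr invinv invmul inv1. reflexivity. }
    assert (Eb : mul (inv b) a = inv e).
    { unfold e. rewrite invmul, invinv. apply Aab; auto. }
    rewrite Eb. apply (lcan e). rewrite cr, <- Ece at 1.
    gn asr cl cr m1 m1r mVl mVr invinv invmul inv1. reflexivity. }
  destruct Hreg as [L HL].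
  assert (Cl : forall L0 : list U, exists s, (forall x, In x s -> A x) /\
     forall a i, A a -> mul i i = P a -> In (F i a) L0 ->
       exists x j, In x s /\ A x /\ mul j j = P x /\ F j x = F i a).
  { induction L0 as [|g L0 IH].
    - exists nil. split; [intros x H; destruct H|]. intros a i _ _ H; destruct H.
    - destruct IH as [s [Hs1 Hs2]].
      destruct (classic (exists x j, A x /\ mul j j = P x /\ F j x = g)) as [Hex|Hno].
      + destruct Hex as [x0 [j0 [Hx0 [Hj0 Hf0]]]].
        exists (x0 :: s). split.
        * intros x [H|H]; [subst; exact Hx0 | auto].
        * intros a i Ha Hi [H|H].
          { exists x0, j0. split; [left; reflexivity|]. rewrite Hf0. auto. }
          { destruct (Hs2 a i Ha Hi H) as [x [j [H1 H3]]]. exists x, j. split; [right; exact H1|exact H3]. }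
      + exists s. split; [exact Hs1|].
        intros a i Ha Hi [H|H].
        { exfalso. apply Hno. exists a, i. auto. }
        { auto. } }
  destruct (Cl L) as [s [Hs1 Hs2]].
  exists s. split; [exact Hs1|].
  intros a Ha.
  destruct (H2 (P a)) as [i [Hi _]].
  destruct (Hs2 a i Ha Hi (HL _ (Ffix a i Ha Hi))) as [x [j [Hx [HxA [Hj Hf]]]]].
  exists x. split; [exact Hx|].
  apply Asub.
  - apply Amul; auto.
  - apply (Key a x i j Ha HxA Hi Hj (eq_sym Hf)).
Qed.
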